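(* Let $\bar\alpha\in[0,1]$ and $n\ge1$, and let $\boldsymbol{\alpha}^*=(\alpha^*_1,\dots,\alpha^*_n)$ be a maximizer of $$\max_{\boldsymbol{\alpha}\in[0,1]^n} C(\boldsymbol{\alpha})\quad\text{subject to}\quad G(\boldsymbol{\alpha})=0,$$ with its entries ordered so that $\alpha^*_1\ge\alpha^*_2\ge\dots\ge\alpha^*_n$. Let $m=\max\{i:\alpha^*_i=1\}$, with $m=0$ if no entry equals $1$. Then $$m=\left\lfloor \frac{\bar\alpha\, n\,(k_1-k_2)}{k_1-\bar\alpha k_2}\right\rfloor .$$
   Context: Model of a road with $n\ge1$ parallel lanes of common length $d>0$. Vehicles have length $L>0$. A vehicle keeps a headway (space gap) $\bar h$ to the vehicle in front of it if both it and the vehicle in front are autonomous, and headway $h$ otherwise, where $0\le \bar h<h$. Vehicle types within a lane are i.i.d. Bernoulli: each vehicle in lane $i$ is autonomous with probability $\alpha_i\in[0,1]$ (the lane's autonomy level). Set $k_1=(L+h)/d$ and $k_2=(h-\bar h)/d$, so $k_1>k_2>0$ and $k_1-k_2=(L+\bar h)/d>0$. The capacity of a lane with autonomy level $\alpha\in[0,1]$ is $$c(\alpha)=\frac{1}{k_1-k_2\alpha^2}=\frac{d}{L+h-(h-\bar h)\alpha^2}.$$ Let $\bar\alpha\in[0,1]$ be the overall fraction of autonomous vehicles on the road. For $\boldsymbol{\alpha}=(\alpha_1,\dots,\alpha_n)\in[0,1]^n$ define $C(\boldsymbol{\alpha})=\sum_{i=1}^n c(\alpha_i)$ (total capacity)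 and $G(\boldsymbol{\alpha})=\sum_{i=1}^n(\alpha_i-\bar\alpha)c(\alpha_i)$; the constraint $G(\boldsymbol{\alpha})=0$ expresses that the overall autonomy level equals $\bar\alpha$. *)

(* Defs.v *)
From Stdlib Require Import Reals Lra Lia.
From Stdlib Require Export Zfloor.
Open Scope R_scope.

Fixpoint rsum (n : nat) (f : nat -> R) : R :=
  match n with
  | O => 0
  | S k => rsum k f + f k
  end.

Definition k1 (d L h hbar : R) : R := (L + h) / d.
Definition k2 (d L h hbar : R) : R := (h - hbar) / d.

Definition cap (d L h hbar a : R) : R :=
  1 / (k1 d L h hbar - k2 d L h hbar * a ^ 2).

(* Lanes are indexed 0..n-1 (lane i+1 of the paper is index i). *)
Definition totC (d L h hbar : R) (n : nat) (alpha : nat -> R) : R :=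
  rsum n (fun i => cap d L h hbar (alpha i)).

Definition totG (d L h hbar abar : R) (n : nat) (alpha : nat -> R) : R :=
  rsum n (fun i => (alpha i - abar) * cap d L h hbar (alpha i)).

Definition feasible (d L h hbar abar : R) (n : nat) (alpha : nat -> R) : Prop :=
  (forall i, (i < n)%nat -> 0 <= alpha i <= 1) /\ totG d L h hbar abar n alpha = 0.

Definition is_maximizer (d L h hbar abar : R) (n : nat) (alpha : nat -> R) : Prop :=
  feasible d L h hbar abar n alpha /\
  forall beta, feasible d L h hbar abar n beta ->
    totC d L h hbar n beta <= totC d L h hbar n alpha.

Definition sorted_desc (n : nat) (alpha : nat -> R) : Prop :=
  forall i j, (i <= j)%nat -> (j < n)%nat -> alpha j <= alpha i.

(* m = max { i in 1..n : alpha*_i = 1 } (1-indexed), or 0 if there is none.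
   With 0-based indices: alpha (m-1) = 1 when m >= 1, and every index j with
   alpha j = 1 satisfies j < m. *)
Definition is_last_one (n : nat) (alpha : nat -> R) (m : nat) : Prop :=
  (m <= n)%nat /\
  (forall j, (j < n)%nat -> alpha j = 1 -> (j < m)%nat) /\
  (m = 0%nat \/ alpha (m - 1)%nat = 1).

(* Main.v *)
Require Import Defs.
From Stdlib Require Import Reals.
From Stdlib Require Import Lra Lia Psatz.
Open Scope R_scope.

Definition capK (K1 K2 x : R) : R := 1 / (K1 - K2 * x ^ 2).
Definition phiK (K1 K2 ab x : R) : R := (x - ab) * capK K1 K2 x.

Section Gen.
Variables K1 K2 ab : R.
Hypothesis HK2 : 0 < K2.
Hypothesis HK12 : K2 < K1.
Hypothesis Hab : 0 <= ab <= 1.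

Lemma Dpos x : 0 <= x <= 1 -> 0 < K1 - K2 * x ^ 2.
Proof. intros. assert (x^2 <= 1) by nra. nra. Qed.

Lemma phi_mono a b : 0 <= a -> a < b -> b <= 1 -> phiK K1 K2 ab a < phiK K1 K2 ab b.
Proof.
  intros. pose proof (Dpos a ltac:(lra)). pose proof (Dpos b ltac:(lra)).
  unfold phiK, capK.
  assert (E : (b - ab) * (1 / (K1 - K2 * b ^ 2)) - (a - ab) * (1 / (K1 - K2 * a ^ 2))
     = (b - a) * (K1 + K2 * a * b - K2 * ab * (a + b)) / ((K1 - K2 * a ^ 2) * (K1 - K2 * b ^ 2)))
    by (field; lra).
  assert (0 < (b - a) * (K1 + K2 * a * b - K2 * ab * (a + b)) / ((K1 - K2 * a ^ 2) * (K1 - K2 * b ^ 2))).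
  { apply Rdiv_lt_0_compat; [|nra].
    apply Rmult_lt_0_compat; [lra|].
    assert (0 <= K2 * (a + b) * (1 - ab)) by (apply Rmult_le_pos; [apply Rmult_le_pos|]; lra).
    assert (0 <= K2 * ((1 - a) * (1 - b))) by (apply Rmult_le_pos; [lra| apply Rmult_le_pos; lra]). nra. }
  lra.
Qed.

Lemma phi_mono_le a b : 0 <= a -> a <= b -> b <= 1 -> phiK K1 K2 ab a <= phiK K1 K2 ab b.
Proof. intros. destruct (Req_dec a b). subst; lra. left; apply phi_mono; lra. Qed.

Lemma three_point p a q : 0 <= p -> p < a -> a < q -> q <= 1 ->
  (capK K1 K2 a - capK K1 K2 p) * (phiK K1 K2 ab q - phiK K1 K2 ab p) <
  (capK K1 K2 q - capK K1 K2 p) * (phiK K1 K2 ab a - phiK K1 K2 ab p).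
Proof.
  intros. pose proof (Dpos p ltac:(lra)). pose proof (Dpos a ltac:(lra)).
  pose proof (Dpos q ltac:(lra)). unfold phiK, capK.
  set (Dp := K1 - K2 * p ^ 2) in *. set (Da := K1 - K2 * a ^ 2) in *.
  set (Dq := K1 - K2 * q ^ 2) in *.
  assert (E : (1 / Da - 1 / Dp) * ((q - ab) * (1 / Dq) - (p - ab) * (1 / Dp)) -
    (1 / Dq - 1 / Dp) * ((a - ab) * (1 / Da) - (p - ab) * (1 / Dp))
    = - K2 * ((a - p) * (q - p) * (q - a)) / (Dp * Da * Dq)).
  { unfold Dp, Da, Dq in *. field. repeat split; lra. }
  assert (0 < K2 * ((a - p) * (q - p) * (q - a)) / (Dp * Da * Dq)).
  { apply Rdiv_lt_0_compat; [|apply Rmult_lt_0_compat; [apply Rmult_lt_0_compat|]; lra].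
    apply Rmult_lt_0_compat; [lra|]. apply Rmult_lt_0_compat; [|lra].
    apply Rmult_lt_0_compat; lra. }
  assert (- K2 * ((a - p) * (q - p) * (q - a)) / (Dp * Da * Dq) =
          - (K2 * ((a - p) * (q - p) * (q - a)) / (Dp * Da * Dq))) by (unfold Rdiv; ring).
  lra.
Qed.

Lemma phi_surj y : phiK K1 K2 ab 0 <= y -> y <= phiK K1 K2 ab 1 ->
  exists a, 0 <= a <= 1 /\ phiK K1 K2 ab a = y.
Proof.
  intros H0 H1.
  assert (Hc : forall a, 0 <= a <= 1 -> ((a - ab) - y * (K1 - K2 * a ^ 2) = 0 <-> phiK K1 K2 ab a = y)).
  { intros a Ha. pose proof (Dpos a Ha). unfold phiK, capK.
    replace ((a - ab) * (1 / (K1 - K2 * a ^ 2))) with ((a - ab) / (K1 - K2 * a ^ 2)) by (unfold Rdiv; ring).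
    split; intro E.
    - apply (Rmult_eq_reg_r (K1 - K2 * a ^ 2)); [|lra]. field_simplify; lra.
    - rewrite <- E. field_simplify; lra. }
  pose proof (Dpos 0 ltac:(lra)). pose proof (Dpos 1 ltac:(lra)).
  destruct (Req_dec y (phiK K1 K2 ab 0)) as [E|N0].
  { exists 0. split; [lra|]. auto. }
  destruct (Req_dec y (phiK K1 K2 ab 1)) as [E|N1].
  { exists 1. split; [lra|]. auto. }
  set (P := fun a => (a - ab) - y * (K1 - K2 * a ^ 2)).
  assert (CP : continuity P) by (unfold P; reg).
  assert (P0 : P 0 < 0).
  { destruct (Rle_lt_dec 0 (P 0)); auto.
    exfalso. assert (P 0 <> 0).
    { intro E. apply N0. symmetry. apply (proj1 (Hc 0 ltac:(lra))). exact E. }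
    unfold phiK, capK in H0. unfold P in *.
    assert (0 < (0 - ab) - y * (K1 - K2 * 0 ^ 2)) by lra.
    assert (y * (K1 - K2 * 0 ^ 2) < 0 - ab) by lra.
    assert (y < (0 - ab) * (1 / (K1 - K2 * 0 ^ 2))).
    { apply (Rmult_lt_reg_r (K1 - K2 * 0 ^ 2)); [lra|]. field_simplify; lra. }
    lra. }
  assert (P1 : 0 < P 1).
  { destruct (Rle_lt_dec (P 1) 0); auto.
    exfalso. assert (P 1 <> 0).
    { intro E. apply N1. symmetry. apply (proj1 (Hc 1 ltac:(lra))). exact E. }
    unfold phiK, capK in H1. unfold P in *.
    assert ((1 - ab) < y * (K1 - K2 * 1 ^ 2)) by lra.
    assert ((1 - ab) * (1 / (K1 - K2 * 1 ^ 2)) < y).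
    { apply (Rmult_lt_reg_r (K1 - K2 * 1 ^ 2)); [lra|]. field_simplify; lra. }
    lra. }
  destruct (IVT P 0 1 CP ltac:(lra) P0 P1) as [z [Hz Pz]].
  exists z. split; auto. apply Hc; auto.
Qed.

Lemma pair_improve ai aj : 0 < ai < 1 -> 0 < aj < 1 ->
  exists p q, 0 <= p <= 1 /\ 0 <= q <= 1 /\
    phiK K1 K2 ab p + phiK K1 K2 ab q = phiK K1 K2 ab ai + phiK K1 K2 ab aj /\
    capK K1 K2 ai + capK K1 K2 aj < capK K1 K2 p + capK K1 K2 q.
Proof.
  intros Hi Hj.
  set (f := phiK K1 K2 ab). set (c := capK K1 K2).
  assert (Hi0 : f 0 < f ai) by (apply phi_mono; lra).
  assert (Hj0 : f 0 < f aj) by (apply phi_mono; lra).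
  assert (Hi1 : f ai < f 1) by (apply phi_mono; lra).
  assert (Hj1 : f aj < f 1) by (apply phi_mono; lra).
  assert (Key : forall p q, 0 <= p -> p < ai -> ai < q -> q <= 1 -> p < aj -> aj < q ->
     f p + f q = f ai + f aj -> c ai + c aj < c p + c q).
  { intros p q Hp1 Hp2 Hq1 Hq2 Hp3 Hq3 E.
    pose proof (three_point p ai q Hp1 Hp2 Hq1 Hq2) as T1.
    pose proof (three_point p aj q Hp1 Hp3 Hq3 Hq2) as T2.
    fold f c in T1, T2.
    assert (Hd : 0 < f q - f p) by (apply Rlt_0_minus, phi_mono; lra).
    assert ((c ai + c aj - 2 * c p) * (f q - f p) < (c q - c p) * (f q - f p)).
    { assert (Eq : f q - f p = (f ai - f p) + (f aj - f p)) by lra.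
      assert (R : (c q - c p) * (f q - f p) = (c q - c p)*(f ai - f p) + (c q - c p)*(f aj - f p)) by (rewrite Eq; ring).
      rewrite R.
      assert (R2 : (c ai + c aj - 2 * c p) * (f q - f p) = (c ai - c p) * (f q - f p) + (c aj - c p) * (f q - f p)) by ring.
      rewrite R2. lra. }
    apply Rmult_lt_reg_r in H; lra. }
  destruct (Rle_lt_dec (f ai + f aj - f 0) (f 1)) as [C1|C2].
  - destruct (phi_surj (f ai + f aj - f 0)) as [q [Hq Eq]]; fold f; try lra.
    fold f in Eq.
    assert (ai < q).
    { destruct (Rlt_le_dec ai q); auto. assert (f q <= f ai) by (apply phi_mono_le; lra). lra. }
    assert (aj < q).
    { destruct (Rlt_le_dec aj q); auto. assert (f q <= f aj) by (apply phi_mono_le; lra). lra. }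
    exists 0, q. repeat split; try lra.
    apply Key; lra.
  - destruct (phi_surj (f ai + f aj - f 1)) as [p [Hp Ep]]; fold f; try lra.
    fold f in Ep.
    assert (p < ai).
    { destruct (Rlt_le_dec p ai); auto. assert (f ai <= f p) by (apply phi_mono_le; lra). lra. }
    assert (p < aj).
    { destruct (Rlt_le_dec p aj); auto. assert (f aj <= f p) by (apply phi_mono_le; lra). lra. }
    exists p, 1. repeat split; try lra.
    apply Key; lra.
Qed.

End Gen.

Lemma rsum_ext n f g : (forall k, (k < n)%nat -> f k = g k) -> rsum n f = rsum n g.
Proof.
  induction n; simpl; intros; auto. rewrite IHn by (intros; apply H; lia). rewrite H by lia. auto.
Qed.

Lemma rsum_le n f g : (forall k, (k < n)%nat -> f k <= g k) -> rsum n f <= rsum n g.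
Proof.
  induction n; simpl; intros; [lra|]. pose proof (IHn ltac:(intros; apply H; lia)).
  pose proof (H n ltac:(lia)). lra.
Qed.

Lemma rsum_lt n f g i : (forall k, (k < n)%nat -> f k <= g k) -> (i < n)%nat -> f i < g i ->
  rsum n f < rsum n g.
Proof.
  induction n; simpl; intros; [lia|].
  destruct (Nat.eq_dec i n).
  - subst. pose proof (rsum_le n f g ltac:(intros; apply H; lia)). lra.
  - pose proof (IHn ltac:(intros; apply H; lia) ltac:(lia) H1). pose proof (H n ltac:(lia)). lra.
Qed.

Definition upd (f : nat -> R) (i : nat) (v : R) := fun k => if Nat.eqb k i then v else f k.

Lemma rsum_upd n F f i v : (i < n)%nat ->
  rsum n (fun k => F (upd f i v k)) = rsum n (fun k => F (f k)) + (F v - F (f i)).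
Proof.
  induction n; simpl; intros; [lia|].
  destruct (Nat.eq_dec i n).
  - subst. rewrite (rsum_ext n (fun k => F (upd f n v k)) (fun k => F (f k))).
    + unfold upd. rewrite Nat.eqb_refl. ring.
    + intros. unfold upd. replace (Nat.eqb k n) with false; auto. symmetry; apply Nat.eqb_neq; lia.
  - rewrite IHn by lia. unfold upd. replace (Nat.eqb n i) with false. ring.
    symmetry; apply Nat.eqb_neq; lia.
Qed.

Lemma rsum_if n m A B : rsum n (fun j => if Nat.ltb j m then A else B) =
  INR (Nat.min n m) * A + INR (n - m) * B.
Proof.
  induction n; cbn [rsum].
  - replace (0 - m)%nat with 0%nat by lia. replace (Nat.min 0 m) with 0%nat by lia. simpl. ring.
  - rewrite IHn. destruct (Nat.ltb n m) eqn:E.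
    + apply Nat.ltb_lt in E. replace (Nat.min (S n) m) with (S (Nat.min n m)) by lia.
      replace (S n - m)%nat with 0%nat by lia. replace (n - m)%nat with 0%nat by lia.
      rewrite S_INR. simpl. ring.
    + apply Nat.ltb_ge in E. replace (Nat.min (S n) m) with (Nat.min n m) by lia.
      replace (S n - m)%nat with (S (n - m)) by lia. rewrite S_INR. ring.
Qed.


Lemma final_ineq K1 K2 ab t N : 0 < K2 -> K2 < K1 -> 0 <= ab <= 1 ->
  t * phiK K1 K2 ab 1 + (N - t) * phiK K1 K2 ab 0 =
  (t * (K1 - ab * K2) - ab * N * (K1 - K2)) / (K1 * (K1 - K2)).
Proof. intros. unfold phiK, capK. field. split; lra. Qed.

Lemma final_lo K1 K2 ab t N : 0 < K2 -> K2 < K1 -> 0 <= ab <= 1 ->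
  t * phiK K1 K2 ab 1 + (N - t) * phiK K1 K2 ab 0 <= 0 ->
  t <= ab * N * (K1 - K2) / (K1 - ab * K2).
Proof.
  intros. rewrite final_ineq in H2 by auto.
  assert (HD : 0 < K1 - ab * K2) by nra.
  assert (HP : 0 < K1 * (K1 - K2)) by (apply Rmult_lt_0_compat; lra).
  assert (t * (K1 - ab * K2) - ab * N * (K1 - K2) <= 0).
  { destruct (Rle_lt_dec (t * (K1 - ab * K2) - ab * N * (K1 - K2)) 0); auto.
    assert (0 < (t * (K1 - ab * K2) - ab * N * (K1 - K2)) / (K1 * (K1 - K2)))
      by (apply Rdiv_lt_0_compat; lra). lra. }
  apply (Rmult_le_reg_r (K1 - ab * K2)); auto.
  replace (ab * N * (K1 - K2) / (K1 - ab * K2) * (K1 - ab * K2)) with (ab * N * (K1 - K2))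
    by (field; lra). lra.
Qed.

Lemma final_hi K1 K2 ab t N : 0 < K2 -> K2 < K1 -> 0 <= ab <= 1 ->
  0 < t * phiK K1 K2 ab 1 + (N - t) * phiK K1 K2 ab 0 ->
  ab * N * (K1 - K2) / (K1 - ab * K2) < t.
Proof.
  intros. rewrite final_ineq in H2 by auto.
  assert (HD : 0 < K1 - ab * K2) by nra.
  assert (HP : 0 < K1 * (K1 - K2)) by (apply Rmult_lt_0_compat; lra).
  assert (0 < t * (K1 - ab * K2) - ab * N * (K1 - K2)).
  { destruct (Rle_lt_dec (t * (K1 - ab * K2) - ab * N * (K1 - K2)) 0); auto.
    assert ((t * (K1 - ab * K2) - ab * N * (K1 - K2)) / (K1 * (K1 - K2)) <= 0).
    { assert (0 < / (K1 * (K1 - K2))) by (apply Rinv_0_lt_compat; auto). unfold Rdiv. nra. }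
    lra. }
  apply (Rmult_lt_reg_r (K1 - ab * K2)); auto.
  replace (ab * N * (K1 - K2) / (K1 - ab * K2) * (K1 - ab * K2)) with (ab * N * (K1 - K2))
    by (field; lra). lra.
Qed.

Lemma final_n K1 K2 ab N : 0 < K2 -> K2 < K1 -> 0 <= ab <= 1 -> 0 <= N ->
  ab * N * (K1 - K2) / (K1 - ab * K2) <= N.
Proof.
  intros. assert (HD : 0 < K1 - ab * K2) by nra.
  apply (Rmult_le_reg_r (K1 - ab * K2)); auto.
  replace (ab * N * (K1 - K2) / (K1 - ab * K2) * (K1 - ab * K2)) with (ab * N * (K1 - K2))
    by (field; lra).
  assert (0 <= N * (K1 * (1 - ab))) by (apply Rmult_le_pos; [|apply Rmult_le_pos]; lra).
  lra.
Qed.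

Theorem theorem2 (d L h hbar abar : R) (n : nat) (alpha : nat -> R) (m : nat)
  (Hd : 0 < d) (HL : 0 < L) (Hhbar : 0 <= hbar) (Hh : hbar < h)
  (Habar : 0 <= abar <= 1) (Hn : (1 <= n)%nat)
  (Hmax : is_maximizer d L h hbar abar n alpha)
  (Hsort : sorted_desc n alpha)
  (Hm : is_last_one n alpha m) :
  Z.of_nat m =
  Zfloor (abar * INR n * (k1 d L h hbar - k2 d L h hbar)
          / (k1 d L h hbar - abar * k2 d L h hbar)).
Proof.
  assert (HK2 : 0 < k2 d L h hbar) by (unfold k2; apply Rdiv_lt_0_compat; lra).
  assert (HK12 : k2 d L h hbar < k1 d L h hbar).
  { unfold k1, k2. assert ((L + h) / d - (h - hbar) / d = (L + hbar) / d) by (field; lra).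
    assert (0 < (L + hbar) / d) by (apply Rdiv_lt_0_compat; lra). lra. }
  set (K1 := k1 d L h hbar) in *. set (K2 := k2 d L h hbar) in *.
  assert (EG : forall b, totG d L h hbar abar n b = rsum n (fun k => phiK K1 K2 abar (b k)))
    by reflexivity.
  assert (EC : forall b, totC d L h hbar n b = rsum n (fun k => capK K1 K2 (b k)))
    by reflexivity.
  destruct Hmax as [[Hr HG] Hopt]. destruct Hm as [Hmn [Hlt Hlast]].
  rewrite EG in HG.
  assert (Hone : forall j, (j < m)%nat -> alpha j = 1).
  { intros j Hj. destruct Hlast as [E|H1]; [lia|].
    pose proof (Hsort j (m - 1)%nat ltac:(lia) ltac:(lia)). pose proof (Hr j ltac:(lia)). lra. }
  assert (Hnone : forall j, (m <= j)%nat -> (j < n)%nat -> alpha j < 1).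
  { intros j H1 H2. destruct (Hr j H2) as [_ [Hl|He]]; auto. apply Hlt in He; auto. lia. }
  assert (Hint : forall i j, (i < n)%nat -> (j < n)%nat -> i <> j ->
     0 < alpha i < 1 -> 0 < alpha j < 1 -> False).
  { intros i j Hi Hj Hij Hai Haj.
    destruct (pair_improve K1 K2 abar HK2 HK12 Habar (alpha i) (alpha j) Hai Haj)
      as [p [q [Hp [Hq [E1 E2]]]]].
    set (b := upd (upd alpha j q) i p).
    assert (Hbi : upd alpha j q i = alpha i).
    { unfold upd. replace (Nat.eqb i j) with false; auto. symmetry; apply Nat.eqb_neq; auto. }
    assert (Fb : feasible d L h hbar abar n b).
    { split.
      - intros k Hk. unfold b, upd. destruct (Nat.eqb k i); auto.
        destruct (Nat.eqb k j); auto.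
      - rewrite EG. unfold b.
        rewrite (rsum_upd n (phiK K1 K2 abar) (upd alpha j q) i p Hi).
        rewrite (rsum_upd n (phiK K1 K2 abar) alpha j q Hj).
        rewrite Hbi. lra. }
    pose proof (Hopt b Fb) as Hc. rewrite !EC in Hc. unfold b in Hc.
    rewrite (rsum_upd n (capK K1 K2) (upd alpha j q) i p Hi) in Hc.
    rewrite (rsum_upd n (capK K1 K2) alpha j q Hj) in Hc.
    rewrite Hbi in Hc. lra. }
  assert (Hzero : forall j, (m < j)%nat -> (j < n)%nat -> alpha j = 0).
  { intros j H1 H2. destruct (Hr j H2) as [[Hz|Hz] _]; auto. exfalso.
    pose proof (Hsort m j ltac:(lia) H2).
    apply (Hint m j); try lia.
    - pose proof (Hnone m ltac:(lia) ltac:(lia)). lra.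
    - split; auto. apply Hnone; lia. }
  set (f1 := phiK K1 K2 abar 1). set (f0 := phiK K1 K2 abar 0).
  assert (Hlo : INR m * f1 + (INR n - INR m) * f0 <= 0).
  { rewrite <- minus_INR by auto.
    replace (INR m) with (INR (Nat.min n m)) by (f_equal; lia).
    rewrite <- rsum_if. rewrite <- HG. apply rsum_le.
    intros k Hk. destruct (Nat.ltb k m) eqn:E.
    - apply Nat.ltb_lt in E. rewrite Hone by auto. unfold f1; lra.
    - pose proof (Hr k Hk). apply phi_mono_le; lra. }
  symmetry. apply Zfloor_eq. rewrite <- INR_IZR_INZ. split.
  - apply final_lo; auto.
  - destruct (Nat.eq_dec m n) as [Emn|Nmn].
    + subst m. pose proof (final_n K1 K2 abar (INR n) HK2 HK12 Habar (pos_INR n)). lra.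
    + assert (Hhi : 0 < (INR m + 1) * f1 + (INR n - (INR m + 1)) * f0).
      { replace (INR m + 1) with (INR (Nat.min n (S m))) by (rewrite <- S_INR; f_equal; lia).
        replace (INR n - INR (Nat.min n (S m))) with (INR (n - S m)).
        2:{ rewrite minus_INR by lia. f_equal. f_equal. lia. }
        rewrite <- rsum_if. rewrite <- HG. apply (rsum_lt n _ _ m).
        - intros k Hk. destruct (Nat.ltb k (S m)) eqn:E.
          + apply Nat.ltb_lt in E. destruct (Nat.eq_dec k m).
            * subst k. pose proof (Hr m Hk). apply phi_mono_le; lra.
            * rewrite Hone by lia. unfold f1; lra.
          + apply Nat.ltb_ge in E. rewrite Hzero by lia. unfold f0; lra.
        - lia.
        - replace (Nat.ltb m (S m)) with true by (symmetry; apply Nat.ltb_lt; lia).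
          pose proof (Hr m ltac:(lia)). pose proof (Hnone m ltac:(lia) ltac:(lia)).
          apply phi_mono; lra. }
      pose proof (final_hi K1 K2 abar (INR m + 1) (INR n) HK2 HK12 Habar Hhi). lra.
Qed.
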